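(* Let $\mathcal A=\{A_s\}_{s\in\mathbf S}\subset CQ(\mathbf X,\mathcal H)$ be an AVcqC ($\mathbf S$ finite) with $C_{A,d}(\mathcal A)>0$, and let $0<R<C_{A,d}(\mathcal A)$. For every sequence of $(l,M_l)$ codes $(x_i^l,D_i^l)_{i=1}^{M_l}$ with $\liminf_l\frac1l\log M_l\ge R$ and $\lim_{l\to\infty}\min_{i\in[M_l]}\min_{s^l\in\mathbf S^l}\mathrm{tr}(A_{s^l}(x_i^l)D_i^l)=1$, there is another sequence of $(l,M_l)$ codes $(x_i^l,\tilde D_i^l)_{i=1}^{M_l}$ with the same codewords and modified decoding operators such that (1) $\liminf_l\frac1l\log M_l\ge R$; (2) $\lim_{l\to\infty}\min_{i\in[M_l]}\min_{s^l\in\mathbf S^l}\mathrm{tr}(A_{s^l}(x_i^l)\tilde D_i^l)=1$; (3) for all $l\in\mathbb N$, $i\in[M_l]$ and $s^l\in\mathbf S^l$: $\mathrm{tr}(A_{s^l}(x_i^l)\tilde D_i^l)<1$.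
   Context: $\mathbf X$ finite, $\mathcal H$ finite-dimensional, $CQ(\mathbf X,\mathcal H)$ the maps $\mathbf X\to\mathcal S(\mathcal H)$; $A_{s^l}(x^l)=\bigotimes_iA_{s_i}(x_i)$. An $(l,M)$ code is $(x_i^l,D_i^l)_{i=1}^M$, $x_i^l\in\mathbf X^l$, $D_i^l\ge0$, $\sum_iD_i^l\le\mathbf 1$. $C_{A,d}(\mathcal A)$ is the supremum of rates $R'$ achievable by such codes with $\liminf_l\frac1l\log M_l\ge R'$ and $\lim_l\max_{s^l}\max_i\mathrm{tr}(A_{s^l}(x_i^l)(\mathbf 1-D_i^l))=0$ (maximal error criterion). *)

(* Defs.v *)
From HB Require Import structures.
From mathcomp Require Import all_boot all_order all_algebra.
From mathcomp Require Import all_classical all_reals all_analysis.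
From mathcomp Require Import complex mxtens.

Set Implicit Arguments.
Unset Strict Implicit.
Unset Printing Implicit Defensive.

Import Order.TTheory GRing.Theory Num.Theory.
Local Open Scope ring_scope.
Local Open Scope classical_set_scope.
Import numFieldNormedType.Exports.

Section QDefs.
Variable R : realType.
Local Notation C := (R[i]).

Fixpoint pdim (d l : nat) : nat :=
  match l with 0 => 1%N | l'.+1 => (d * pdim d l')%N end.

Definition adjmx {m n : nat} (A : 'M[C]_(m, n)) : 'M[C]_(n, m) :=
  map_mx Num.conj (A^T).

Definition psd {n : nat} (A : 'M[C]_n) : Prop :=
  adjmx A = A /\ forall v : 'cV[C]_n, 0 <= (adjmx v *m A *m v) 0 0.

Definition is_state {n : nat} (rho : 'M[C]_n) : Prop :=
  psd rho /\ \tr rho = 1.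

Fixpoint tens {d : nat} (l : nat) : ('I_l -> 'M[C]_d) -> 'M[C]_(pdim d l) :=
  match l as n return ('I_n -> 'M[C]_d) -> 'M[C]_(pdim d n) with
  | 0 => fun _ => 1%:M
  | l'.+1 => fun f => tensmx (f ord0) (tens (fun i : 'I_l' => f (lift ord0 i)))
  end.

Definition Atens {S X : finType} {d : nat} (A : S -> X -> 'M[C]_d) (l : nat)
  (s : 'I_l -> S) (x : 'I_l -> X) : 'M[C]_(pdim d l) :=
  tens (fun i => A (s i) (x i)).

(* an AVcqC: a family of cq channels X -> S(H), indexed by S *)
Definition is_AVcqC {S X : finType} {d : nat} (A : S -> X -> 'M[C]_d) : Prop :=
  forall s x, is_state (A s x).

Definition is_code {d l M : nat} (D : 'I_M -> 'M[C]_(pdim d l)) : Prop :=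
  (forall i, psd (D i)) /\ psd (1%:M - \sum_(i < M) D i).

Definition rate_liminf (M : nat -> nat) : \bar R :=
  limn_einf (fun l => ((ln (M l)%:R / l%:R : R))%:E).

Definition max_err {S X : finType} {d : nat} (A : S -> X -> 'M[C]_d)
  (l M : nat) (x : 'I_M -> 'I_l -> X) (D : 'I_M -> 'M[C]_(pdim d l)) : R :=
  \big[Num.max/0]_(s : {ffun 'I_l -> S})
    \big[Num.max/0]_(i < M)
       complex.Re (\tr (Atens A s (x i) *m (1%:M - D i))).

(* min_i min_{s^l} tr(A_{s^l}(x_i^l) D_i^l)  (1 on an empty index set) *)
Definition min_succ {S X : finType} {d : nat} (A : S -> X -> 'M[C]_d)
  (l M : nat) (x : 'I_M -> 'I_l -> X) (D : 'I_M -> 'M[C]_(pdim d l)) : R :=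
  \big[Num.min/1]_(i < M)
    \big[Num.min/1]_(s : {ffun 'I_l -> S})
       complex.Re (\tr (Atens A s (x i) *m D i)).

(* R' is achievable with deterministic codes under maximal error criterion *)
Definition achievable {S X : finType} {d : nat} (A : S -> X -> 'M[C]_d)
  (r : R) : Prop :=
  exists (M : nat -> nat) (x : forall l, 'I_(M l) -> 'I_l -> X)
         (D : forall l, 'I_(M l) -> 'M[C]_(pdim d l)),
    (forall l, is_code (D l)) /\
    (r%:E <= rate_liminf M)%E /\
    (fun l => max_err A (x l) (D l)) @ \oo --> (0 : R).

Definition cap_det {S X : finType} {d : nat} (A : S -> X -> 'M[C]_d) : \bar R :=
  ereal_sup [set r%:E | r in achievable A].

End QDefs.
Arguments rate_liminf {R} M.

(* Main.v *)
Require Import Defs.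
From HB Require Import structures.
From mathcomp Require Import all_boot all_order all_algebra.
From mathcomp Require Import all_classical all_reals all_analysis.
From mathcomp Require Import complex mxtens.

Import Order.TTheory GRing.Theory Num.Theory.
Local Open Scope ring_scope.
Local Open Scope classical_set_scope.
Import numFieldNormedType.Exports.

Module Helpers.
Set Implicit Arguments. Unset Strict Implicit.

Section H.
Variable R : realType.
Local Notation C := (R[i]).

Lemma adjmx_mul m n p (A : 'M[C]_(m,n)) (B : 'M[C]_(n,p)) :
  adjmx (A *m B) = adjmx B *m adjmx A.
Proof. by rewrite /adjmx trmx_mul map_mxM. Qed.

Lemma adjmxK m n (A : 'M[C]_(m,n)) : adjmx (adjmx A) = A.
Proof. by apply/matrixP => i j; rewrite !mxE conjCK. Qed.

Lemma adjmxD m n (A B : 'M[C]_(m,n)) : adjmx (A + B) = adjmx A + adjmx B.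
Proof. by apply/matrixP => i j; rewrite !mxE rmorphD. Qed.

Lemma adjmxB m n (A B : 'M[C]_(m,n)) : adjmx (A - B) = adjmx A - adjmx B.
Proof. by apply/matrixP => i j; rewrite !mxE rmorphB. Qed.

Lemma adjmx_sum m n I (r : seq I) (F : I -> 'M[C]_(m,n)) :
  adjmx (\sum_(i <- r) F i) = \sum_(i <- r) adjmx (F i).
Proof.
elim: r => [|a r IH]; first by rewrite !big_nil; apply/matrixP=> i j; rewrite !mxE conjC0.
by rewrite !big_cons adjmxD IH.
Qed.

Lemma adjmx1 n : adjmx (1%:M : 'M[C]_n) = 1%:M.
Proof. by apply/matrixP => i j; rewrite !mxE eq_sym; case: eqP; rewrite ?conjC1 ?conjC0. Qed.

Lemma adjmxZ m n (c : C) (A : 'M[C]_(m,n)) : adjmx (c *: A) = c^* *: adjmx A.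
Proof. by apply/matrixP => i j; rewrite !mxE rmorphM. Qed.

Lemma tr_gram_ge0 m n (E : 'M[C]_(m,n)) : 0 <= \tr (adjmx E *m E).
Proof.
rewrite /mxtrace; apply: sumr_ge0 => i _; rewrite !mxE.
apply: sumr_ge0 => k _; rewrite !mxE mulrC; exact: mul_conjC_ge0.
Qed.

Lemma psd_gram m n (B : 'M[C]_(m,n)) : psd (adjmx B *m B).
Proof.
split; first by rewrite adjmx_mul adjmxK.
move=> v; have -> : adjmx v *m (adjmx B *m B) *m v = adjmx (B *m v) *m (B *m v)
  by rewrite adjmx_mul !mulmxA.
have := tr_gram_ge0 (B *m v).
by rewrite /mxtrace big_ord1.
Qed.

Lemma psdD n (P Q : 'M[C]_n) : psd P -> psd Q -> psd (P + Q).
Proof.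
move=> [hP gP] [hQ gQ]; split; first by rewrite adjmxD hP hQ.
by move=> v; rewrite mulmxDr mulmxDl mxE addr_ge0.
Qed.

Lemma psd_sum n I (r : seq I) (F : I -> 'M[C]_n) :
  (forall i, psd (F i)) -> psd (\sum_(i <- r) F i).
Proof.
move=> HF; elim: r => [|a r IH].
  rewrite big_nil; split; first by apply/matrixP=> i j; rewrite !mxE conjC0.
  by move=> v; rewrite mulmx0 mul0mx mxE.
by rewrite big_cons; apply: psdD.
Qed.

Lemma psdZ n (c : R) (P : 'M[C]_n) : 0 <= c -> psd P -> psd ((c%:C)%C *: P).
Proof.
move=> c0 [hP gP]; split.
  by rewrite adjmxZ hP geC0_conj // ler0c.
by move=> v; rewrite -scalemxAr -scalemxAl mxE mulr_ge0 // ler0c.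
Qed.

Lemma psd1 n : psd (1%:M : 'M[C]_n).
Proof. by have := psd_gram (1%:M : 'M[C]_n); rewrite adjmx1 mulmx1. Qed.

Local Open Scope sesquilinear_scope.

Lemma adjmxE m n (A : 'M[C]_(m,n)) : adjmx A = A ^t* .
Proof. by []. Qed.

Lemma psd_factor n (P : 'M[C]_n) : psd P -> exists B : 'M[C]_n, P = adjmx B *m B.
Proof.
move=> [hP gP].
have herm : P \is hermsymmx.
  by apply/is_hermitianmxP; rewrite expr0 scale1r -adjmxE hP.
have /orthomx_spectralP PE := hermitian_normalmx herm.
set U := spectralmx P in PE; set sp := spectral_diag P in PE.
have Uu : U \is unitarymx by apply: spectral_unitarymx.
have UU : U *m adjmx U = 1%:M by apply/unitarymxP.
rewrite invmx_unitary // -adjmxE in PE.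
have sp_ge0 : forall j, 0 <= sp 0 j.
  move=> j; pose e : 'cV[C]_n := delta_mx j (0 : 'I_1).
  have := gP (adjmx U *m e).
  rewrite adjmx_mul adjmxK PE.
  have -> : adjmx e *m U *m (adjmx U *m diag_mx sp *m U) *m (adjmx U *m e)
         = adjmx e *m diag_mx sp *m e.
    have UUK : forall k (X : 'M[C]_(k,n)), X *m U *m adjmx U = X.
      by move=> k X; rewrite -mulmxA UU mulmx1.
    by rewrite !mulmxA !UUK.
  rewrite mul_mx_diag mxE (bigD1 j) //= big1 ?addr0; last first.
    by move=> k /negbTE kj; rewrite !mxE kj /= mulr0.
  by rewrite !mxE !eqxx /= conjC1 mul1r !mulr1.
exists (diag_mx (\row_j sqrtC (sp 0 j)) *m U).
rewrite adjmx_mul PE -!mulmxA; congr (_ *m _); rewrite !mulmxA; congr (_ *m _).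
rewrite /adjmx tr_diag_mx map_diag_mx mulmx_diag; congr diag_mx.
apply/rowP => j; rewrite !mxE -[LHS]sqrtCK expr2; congr (_ * _).
by symmetry; apply: geC0_conj; rewrite sqrtC_ge0.
Qed.


Lemma tr_psd_ge0 n (P Q : 'M[C]_n) : psd P -> psd Q -> 0 <= \tr (P *m Q).
Proof.
move=> /psd_factor [B ->] /psd_factor [D ->].
rewrite mulmxA mxtrace_mulC !mulmxA.
have -> : D *m adjmx B *m B *m adjmx D = adjmx (B *m adjmx D) *m (B *m adjmx D).
  by rewrite adjmx_mul adjmxK !mulmxA.
exact: tr_gram_ge0.
Qed.

Lemma adjmx_tens m n p q (A : 'M[C]_(m,n)) (B : 'M[C]_(p,q)) :
  adjmx (tensmx A B) = tensmx (adjmx A) (adjmx B).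
Proof. by rewrite /adjmx trmx_tens map_mxT. Qed.

Lemma tr_tensmx m n (A : 'M[C]_m) (B : 'M[C]_n) :
  \tr (tensmx A B) = \tr A * \tr B.
Proof.
rewrite /mxtrace (reindex (@mxtens_index m n)); last first.
  by exists (@mxtens_unindex m n) => k _; rewrite ?mxtens_indexK ?mxtens_unindexK.
rewrite (eq_bigr (fun ij : 'I_m * 'I_n => A ij.1 ij.1 * B ij.2 ij.2)); last first.
  by move=> [i j] _; rewrite tensmxE.
rewrite -(pair_bigA _ (fun i j => A i i * B j j)) /= big_distrl /=.
by apply: eq_bigr => i _; rewrite big_distrr.
Qed.

Lemma tens_gram d l (f : 'I_l -> 'M[C]_d) : (forall i, psd (f i)) ->
  exists B : 'M[C]_(pdim d l), tens f = adjmx B *m B.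
Proof.
elim: l f => [|l IH] f Hf /=.
  by exists 1%:M; rewrite adjmx1 mulmx1.
have [B0 ->] := psd_factor (Hf ord0).
have [B1 ->] := IH (fun i => f (lift ord0 i)) (fun i => Hf _).
by exists (tensmx B0 B1); rewrite adjmx_tens tensmx_mul.
Qed.

Lemma tens_tr d l (f : 'I_l -> 'M[C]_d) : (forall i, \tr (f i) = 1) ->
  \tr (tens f) = 1.
Proof.
elim: l f => [|l IH] f Hf /=; first by rewrite mxtrace1.
by rewrite tr_tensmx Hf IH ?mulr1.
Qed.

Lemma psd0 n : psd (0 : 'M[C]_n).
Proof. by have := @psdZ n 0 1%:M (lexx _) (psd1 n); rewrite scale0r; apply. Qed.

Lemma psd_one_sub d l M (D : 'I_M -> 'M[C]_(pdim d l)) i : is_code D -> psd (1%:M - D i).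
Proof.
move=> [HD Hc].
have -> : 1%:M - D i = (1%:M - \sum_(j < M) D j) + \sum_(j < M | j != i) D j.
  by rewrite (bigD1 i) //= opprD addrA subrK.
apply: psdD => //; rewrite big_mkcond; apply: psd_sum => j; case: ifP => _ //.
exact: psd0.
Qed.

Lemma code_bound (S X : finType) d (A : S -> X -> 'M[C]_d) l M (xs : 'I_M -> 'I_l -> X)
   (D : 'I_M -> 'M[C]_(pdim d l)) (i : 'I_M) (s : 'I_l -> S) :
  is_AVcqC A -> is_code D -> complex.Re (\tr (Atens A s (xs i) *m D i)) <= 1.
Proof.
move=> hA hD.
have Tpsd : psd (Atens A s (xs i)).
  rewrite /Atens; have [B ->] := tens_gram (fun j => (hA (s j) (xs i j)).1); exact: psd_gram.
have Ttr : \tr (Atens A s (xs i)) = 1 by apply: tens_tr => j; exact: (hA _ _).2.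
have := tr_psd_ge0 Tpsd (psd_one_sub i hD).
rewrite mulmxBr mulmx1 linearB /= Ttr.
case: (\tr (_ *m D i)) => a b; rewrite lecE /= => /andP [_].
by rewrite subr_ge0.
Qed.

Lemma Re_scale (c : R) (z : C) : complex.Re ((c%:C)%C * z) = c * complex.Re z.
Proof. by case: z => a b /=; rewrite mul0r subr0. Qed.

Lemma bigmin_le1 (I : finType) (F : I -> R) : \big[Num.min/1]_i F i <= 1.
Proof.
apply: (big_rec (fun y => y <= 1)) => // i y _ hy.
by rewrite ge_min hy orbT.
Qed.

Lemma bigmin_le (I : finType) (F : I -> R) i : \big[Num.min/1]_i F i <= F i.
Proof. by rewrite (bigD1 i) //= ge_min lexx. Qed.

Lemma bigmin_mono (I : finType) (F G : I -> R) : (forall i, F i <= G i) ->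
  \big[Num.min/1]_i F i <= \big[Num.min/1]_i G i.
Proof.
move=> FG; apply: (big_ind (fun y => \big[Num.min/1]_i F i <= y)).
- exact: bigmin_le1.
- by move=> a b ha hb; rewrite le_min ha hb.
- by move=> i _; apply: le_trans (FG i); apply: bigmin_le.
Qed.

Lemma bigmin_scale (I : finType) (F : I -> R) (c : R) : 0 <= c -> c <= 1 ->
  c * \big[Num.min/1]_i F i <= \big[Num.min/1]_i (c * F i).
Proof.
move=> c0 c1; apply: (big_ind (fun y => c * \big[Num.min/1]_i F i <= y)).
- apply: le_trans c1; rewrite -[leRHS]mulr1; apply: ler_wpM2l => //; exact: bigmin_le1.
- by move=> a b ha hb; rewrite le_min ha hb.
- by move=> i _; apply: ler_wpM2l => //; apply: bigmin_le.
Qed.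

End H.
End Helpers.
Import Helpers.

Theorem lemma11 (R : realType) (S X : finType) (d : nat)
  (A : S -> X -> 'M[R[i]]_d) :
  is_AVcqC A ->
  (0 < cap_det A)%E ->
  forall r : R, 0 < r -> (r%:E < cap_det A)%E ->
  forall (M : nat -> nat) (x : forall l, 'I_(M l) -> 'I_l -> X)
         (D : forall l, 'I_(M l) -> 'M[R[i]]_(pdim d l)),
    (forall l, is_code (D l)) ->
    (r%:E <= rate_liminf M)%E ->
    (fun l => min_succ A (x l) (D l)) @ \oo --> (1 : R) ->
  exists Dt : forall l, 'I_(M l) -> 'M[R[i]]_(pdim d l),
    (forall l, is_code (Dt l)) /\
    (r%:E <= rate_liminf M)%E /\
    (fun l => min_succ A (x l) (Dt l)) @ \oo --> (1 : R) /\
    (forall l (i : 'I_(M l)) (s : 'I_l -> S),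
        complex.Re (\tr (Atens A s (x l i) *m Dt l i)) < 1).
Proof.
move=> hA _ r _ _ M x D HD Hr Hlim.
pose c (l : nat) : R := 1 - harmonic l.
have hl : forall l, harmonic l = (l.+1%:R)^-1 :> R by [].
have c0 : forall l, 0 <= c l.
  by move=> l; rewrite /c subr_ge0 hl invf_le1 ?ltr0Sn // ler1n.
have c1 : forall l, c l < 1.
  by move=> l; rewrite /c ltrBlDr ltrDl harmonic_gt0.
have hc : c @ \oo --> (1 : R).
  rewrite -[X in _ --> X]subr0; apply: cvgB; first exact: cvg_cst.
  exact: cvg_harmonic.
clearbody c.
have trZ : forall l (T : 'M[R[i]]_(pdim d l)) (E : 'M[R[i]]_(pdim d l)),
    complex.Re (\tr (T *m ((c l)%:C%C *: E))) = c l * complex.Re (\tr (T *m E)).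
  by move=> l T E; rewrite -scalemxAr mxtraceZ Re_scale.
exists (fun l i => (c l)%:C%C *: D l i).
split.
  move=> l; have [HDi Hc] := HD l; split => [i|]; first exact: psdZ.
  have -> : 1%:M - \sum_(i < M l) (c l)%:C%C *: D l i
      = (1 - c l)%:C%C *: 1%:M + (c l)%:C%C *: (1%:M - \sum_(i < M l) D l i).
    rewrite scalerBr -scaler_sumr rmorphB rmorph1 scalerBl scale1r.
    by rewrite addrA subrK.
  apply: psdD; apply: psdZ => //; [by rewrite subr_ge0 ltW | exact: psd1].
split; first exact: Hr.
split; last first.
  move=> l i s; rewrite trZ.
  apply: (le_lt_trans _ (c1 l)); rewrite -[leRHS]mulr1.
  by apply: ler_wpM2l => //; apply: code_bound.
apply: (@squeeze_cvgr _ _ _ _ (fun l => c l * min_succ A (x l) (D l)) (fun=> 1)).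
- apply: nearW => l; apply/andP; split; last first.
    by rewrite /min_succ; apply: bigmin_le1.
  rewrite /min_succ; apply: le_trans (bigmin_scale _ (c0 l) (ltW (c1 l))) _.
  apply: bigmin_mono => i; apply: le_trans (bigmin_scale _ (c0 l) (ltW (c1 l))) _.
  by apply: bigmin_mono => s; rewrite trZ.
- by rewrite -[X in _ --> X]mulr1; apply: cvgM.
- apply: cvg_cst.
Qed.
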